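(* Fix $k\in\mathbb{N}$, positive constants $b_0,b_1,b_2,\lambda_0,\lambda_1$ and $\mu\in(0,1)$. There exists $C>0$ depending only on $b_0,b_1,\lambda_0,\lambda_1,\mu$ (and the fixed $k$) such that the following holds. Let $T\geq10$, $\ell<r$, $a^\pm\in\mathbb{R}^k$, $g:[\ell,r]\to\mathbb{R}$ Lipschitz with $g(\ell)=g(r)=0$, and $P\subset(\ell,\ell+T^{1/2})\cap(\ell,r)$ finite. Suppose that $r-\ell\leq b_0T$, $|P|\leq b_0T$, $|g(x)-g(y)|\leq b_1T|x-y|$ for all $x,y$, $a^\pm_j-a^\pm_{j+1}\geq\lambda_0T^{1/2}$ for $j\in\{1,\dots,k-1\}$, $a^-_k-g(\ell)\geq\lambda_1T$, $a^+_k-g(r)\geq\lambda_1T$, $a^-_1-g(\ell)\leq b_2T^2$, $a^+_1-g(r)\leq b_2T^2$. Then $\mathbb{P}_{\mathcal{L}}(\mathsf{H})\geq C^{-1}e^{-CT^{5/2}}$.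
   Context: $\mathbb{P}_{\mathrm{free}}$ is the law of $k$ independent Brownian bridges (diffusion parameter one) $\mathcal{L}=(\mathcal{L}_1,\dots,\mathcal{L}_k)$ on $[\ell,r]$ with $\mathcal{L}_j(\ell)=a^-_j$, $\mathcal{L}_j(r)=a^+_j$. $W(\mathcal{L})=1$ if $\mathcal{L}_j(p)>g(p)$ for all $p\in P$ and all $j$, and $0$ otherwise; $\mathbb{P}_{\mathcal{L}}$ is given by $d\mathbb{P}_{\mathcal{L}}/d\mathbb{P}_{\mathrm{free}}=W/\mathbb{E}_{\mathrm{free}}[W]$. $\mathsf{H}$ is the event that $\mathcal{L}_j(p)-\mathcal{L}_{j+1}(p)\geq\mu\lambda_0T^{1/2}$ for all $p\in P$, $j\in\{1,\dots,k-1\}$, and $\mathcal{L}_k(p)-g(p)\geq\mu\lambda_1T$ for all $p\in P$. *)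

(* Defs.v *)
From HB Require Import structures.
From mathcomp Require Import all_boot all_order all_algebra.
From mathcomp Require Import all_classical all_reals all_analysis.
Set Implicit Arguments. Unset Strict Implicit. Unset Printing Implicit Defensive.
Import Order.TTheory GRing.Theory Num.Theory.
Import numFieldNormedType.Exports.
Local Open Scope ring_scope.

Section Defs.
Variable R : realType.

Definition heat (t x y : R) : R :=
  expR (- (y - x) ^+ 2 / (2 * t)) / Num.sqrt (2 * pi * t).

(* Finite-dimensional density of a Brownian bridge (diffusion parameter one)
   on [l, r] from a to b, at the increasing times ts (inside (l, r)),
   evaluated at the values xs (size xs = size ts). *)
Definition bb_dens (l r a b : R) (ts xs : seq R) : R :=
  let tau := l :: rcons ts r in
  let xi := a :: rcons xs b in
  (\prod_(i < (size ts).+1)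
      heat (nth 0 tau i.+1 - nth 0 tau i) (nth 0 xi i) (nth 0 xi i.+1))
  / heat (r - l) a b.

Fixpoint iint (n : nat) (F : (nat -> R) -> \bar R) : \bar R :=
  match n with
  | 0 => F (fun _ => 0)
  | n'.+1 => (\int[@lebesgue_measure R]_x
                iint n' (fun v => F (fun i => if i == n' then x else v i)))%E
  end.

(* Value of curve L_j (1 <= j <= k) at the i-th point of P (m = |P|),
   encoded in the coordinate vector v. *)
Definition curve (m : nat) (v : nat -> R) (j i : nat) : R := v ((j.-1) * m + i)%N.

(* Joint density under P_free of (L_j(p))_{j in 1..k, p in P}. *)
Definition free_dens (k : nat) (l r : R) (am ap : nat -> R) (P : seq R)
  (v : nat -> R) : R :=
  \prod_(j < k) bb_dens l r (am j.+1) (ap j.+1) P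
     [seq curve (size P) v j.+1 i | i <- iota 0 (size P)].

Definition Wev (k : nat) (g : R -> R) (P : seq R) (v : nat -> R) : bool :=
  [forall j : 'I_k, forall i : 'I_(size P),
     g (nth 0 P i) < curve (size P) v j.+1 i].

Definition Hev (k : nat) (mu lam0 lam1 T : R) (g : R -> R) (P : seq R)
  (v : nat -> R) : bool :=
  [forall j : 'I_k, forall i : 'I_(size P),
     ((j.+1 < k)%N ==>
        (mu * lam0 * Num.sqrt T <=
           curve (size P) v j.+1 i - curve (size P) v j.+2 i))
     && ((j.+1 == k) ==>
        (mu * lam1 * T <= curve (size P) v j.+1 i - g (nth 0 P i)))].

Definition Efree (k : nat) (l r : R) (am ap : nat -> R) (P : seq R)
  (F : (nat -> R) -> bool) : \bar R :=
  iint (k * size P) (fun v => (free_dens k l r am ap P v * (F v)%:R)%:E).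

Definition PL_H (k : nat) (mu lam0 lam1 T l r : R) (am ap : nat -> R)
  (g : R -> R) (P : seq R) : R :=
  fine (Efree k l r am ap P (fun v => Wev k g P v && Hev k mu lam0 lam1 T g P v))
  / fine (Efree k l r am ap P (Wev k g P)).

End Defs.

(* Main.v *)
Require Import Defs.
From HB Require Import structures.
From mathcomp Require Import all_boot all_order all_algebra.
From mathcomp Require Import all_classical all_reals all_analysis.
From mathcomp Require Import normal_distribution measurable_realfun.
From mathcomp Require Import ring lra zify.
Import Order.TTheory GRing.Theory Num.Theory.
Local Open Scope ring_scope.

Set Implicit Arguments. Unset Strict Implicit.


Section Gen.
Context (R : realType).
Local Notation mu := (@lebesgue_measure R).

Definition upd (n : nat) (x : R) (v : nat -> R) : nat -> R :=
  fun i => if i == n then x else v i.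

Lemma le_int_nm (f g : R -> \bar R) :
  (forall x, (0 <= f x)%E) -> (forall x, (f x <= g x)%E) ->
  (\int[mu]_x f x <= \int[mu]_x g x)%E.
Proof.
move=> f0 fg.
have g0 x : (0 <= g x)%E by apply: le_trans (f0 x) (fg x).
rewrite !ge0_integralTE//; apply: le_ereal_sup => _ [h hf <-].
by exists h => // x; apply: le_trans (hf x) (fg x).
Qed.

Lemma iint_ge0 N (F : (nat -> R) -> \bar R) :
  (forall v, (0 <= F v)%E) -> (0 <= iint N F)%E.
Proof.
elim: N F => [|N IH] F F0 /=; first exact: F0.
by apply: integral_ge0 => x _; apply: IH.
Qed.

Lemma iint_le N (F G : (nat -> R) -> \bar R) :
  (forall v, (0 <= F v)%E) -> (forall v, (F v <= G v)%E) ->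
  (iint N F <= iint N G)%E.
Proof.
elim: N F G => [|N IH] F G F0 FG /=; first exact: FG.
apply: le_int_nm => x; first by apply: iint_ge0.
by apply: IH.
Qed.

Lemma int_cst_indic (K A w : R) : 0 <= K -> 0 <= w ->
  (\int[mu]_x (K * \1_(`[A, A + w]%classic) x)%:E = (K * w)%:E)%E.
Proof.
move=> K0 w0.
under eq_integral do rewrite EFinM.
rewrite ge0_integralZl_EFin//; last first.
  by apply/measurable_EFinP; apply: measurable_indic.
rewrite integral_indic//= setIT lebesgue_measure_itv/=.
case: ifPn => [_|]; first by rewrite -EFinM; congr (_ %:E); rewrite addrAC subrr add0r.
move=> /negP h.
have -> : w = 0.
  apply/eqP; rewrite eq_le w0 andbT leNgt; apply/negP => wp; apply: h.
  by rewrite lte_fin ltrDl.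
by rewrite mulr0 mule0.
Qed.


Lemma iint_lb N : forall (F : (nat -> R) -> \bar R) (al : nat -> (nat -> R) -> R)
  (w : nat -> R) (c : R),
  (forall n, (n < N)%N -> 0 <= w n) -> 0 <= c ->
  (forall n v v', (n < N)%N -> (forall i, (n < i)%N -> v i = v' i) -> al n v = al n v') ->
  (forall v, (forall i, (N <= i)%N -> v i = 0) ->
     (forall n, (n < N)%N -> al n v <= v n <= al n v + w n) -> (c%:E <= F v)%E) ->
  (forall v, (0 <= F v)%E) ->
  ((c * \prod_(n < N) w n)%:E <= iint N F)%E.
Proof.
elim: N => [|N IH] F al w c w0 c0 alD Freg F0.
  by rewrite big_ord0 mulr1 /=; apply: Freg => [i _|n]; [done | rewrite ltn0].
rewrite /=.
set A := al N (fun _ => 0).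
have wN : 0 <= w N by apply: w0.
have Kp : 0 <= c * \prod_(n < N) w n.
  by rewrite mulr_ge0 // prodr_ge0 // => i _; apply: w0; rewrite ltnS ltnW.
rewrite big_ord_recr /= mulrA -(@int_cst_indic (c * \prod_(n < N) w n) A (w N)) //.
apply: le_int_nm => [x|x]; first by rewrite lee_fin mulr_ge0 // indic_ge0.
rewrite indicE; case: (boolP (x \in _)) => xin; last first.
  by rewrite mulr0; apply: iint_ge0 => v; apply: F0.
rewrite mulr1.
apply: (IH _ (fun n v => al n (upd N x v))) => //.
- by move=> n nN; apply: w0; apply: ltnW.
- move=> n v v' nN vv'; apply: alD; first by apply: ltnW.
  by move=> i ni; rewrite /upd; case: (i == N) => //; apply: vv'.
- move=> v vz vch; apply: Freg.
    move=> i Ni; rewrite /upd; case: eqP => [iN|iN]; first by move: Ni; rewrite iN ltnn.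
    by apply: vz; apply: ltnW.
  move=> n; rewrite ltnS leq_eqVlt => /orP[/eqP nN|nN].
    subst n; rewrite /upd eqxx.
    have -> : al N (fun i => if i == N then x else v i) = A.
      apply: alD => // i Ni; rewrite (gtn_eqF Ni); apply: vz; exact: ltnW.
    by move: xin; rewrite inE /= in_itv /=.
  by rewrite /upd (ltn_eqF nN); apply: vch.
Qed.

Lemma iint_ub N : forall (F : (nat -> R) -> \bar R) (psi : nat -> (nat -> R) -> R) (c : R),
  0 <= c ->
  (forall n v v', (n < N)%N -> (forall i, (n <= i)%N -> v i = v' i) -> psi n v = psi n v') ->
  (forall n v, (n < N)%N -> 0 <= psi n v) ->
  (forall n v K, (n < N)%N -> 0 <= K ->
     (\int[mu]_x (K * psi n (upd n x v))%:E <= K%:E)%E) ->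
  (forall v, (forall i, (N <= i)%N -> v i = 0) ->
     (F v <= (c * \prod_(n < N) psi n v)%:E)%E) ->
  (forall v, (0 <= F v)%E) ->
  (iint N F <= c%:E)%E.
Proof.
elim: N => [|N IH] F psi c c0 psiD psi0 psiI Fle F0.
  by rewrite /=; have := Fle (fun _ => 0) (fun i _ => erefl); rewrite big_ord0 mulr1.
rewrite /=.
have cp : forall x, 0 <= c * psi N (upd N x (fun _ => 0)).
  by move=> x; rewrite mulr_ge0 // psi0.
apply: le_trans (psiI N (fun _ => 0) c (ltnSn N) c0).
apply: le_int_nm => [x|x]; first by apply: iint_ge0.
apply: (IH _ (fun n v => psi n (upd N x v))) => //.
- move=> n v v' nN vv'; apply: psiD; first by apply: ltnW.
  by move=> i ni; rewrite /upd; case: (i == N) => //; apply: vv'.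
- by move=> n v nN; apply: psi0; apply: ltnW.
- move=> n v K nN K0.
  have -> : (fun y => (K * psi n (upd N x (upd n y v)))%:E) =
            (fun y => (K * psi n (upd n y (upd N x v)))%:E).
    apply: funext => y; congr ((K * _)%:E); congr (psi n _).
    apply: funext => i; rewrite /upd; case: (eqVneq i N) => [->|//].
    by rewrite (gtn_eqF nN).
  by apply: psiI => //; apply: ltnW.
- move=> v vz; apply: le_trans (Fle _ _) _.
    move=> i Ni; rewrite /upd; case: eqP => [iN|iN]; first by move: Ni; rewrite iN ltnn.
    by apply: vz; apply: ltnW.
  rewrite big_ord_recr /= lee_fin.
  rewrite (psiD N (upd N x v) (upd N x (fun _ => 0))) //; last first.
    move=> i; rewrite leq_eqVlt => /orP[/eqP Ni|Ni]; first by rewrite -Ni /upd eqxx.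
    by rewrite /upd (gtn_eqF Ni); apply: vz; apply: ltnW.
  by rewrite mulrA mulrAC.
Qed.

End Gen.


Section Heat.
Context (R : realType).
Local Notation mu := (@lebesgue_measure R).

Lemma heat_gt0 (t x y : R) : 0 < t -> 0 < heat t x y.
Proof.
move=> t0; rewrite /heat divr_gt0 ?expR_gt0 // sqrtr_gt0.
by rewrite mulr_gt0 // mulr_gt0 // pi_gt0.
Qed.

Lemma heat_ge0 (t x y : R) : 0 < t -> 0 <= heat t x y.
Proof. by move=> t0; apply: ltW; apply: heat_gt0. Qed.

Lemma heat_normal (t x y : R) : 0 < t -> heat t x y = normal_pdf x (Num.sqrt t) y.
Proof.
move=> t0; have st : Num.sqrt t != 0 by rewrite gt_eqF // sqrtr_gt0.
rewrite normal_pdfE // /heat /normal_peak /normal_fun sqr_sqrtr; last exact: ltW.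
rewrite -[t *+ 2]mulr_natl -[t * pi *+ 2]mulr_natl [RHS]mulrC.
have -> : 2%:R * (t * pi) = 2 * pi * t :> R by ring.
by [].
Qed.

Lemma int_heat (t m K : R) : 0 < t -> 0 <= K ->
  (\int[mu]_x (K * heat t m x)%:E = K%:E)%E.
Proof.
move=> t0 K0.
under eq_integral do rewrite EFinM heat_normal //.
rewrite integralZl //; last exact: integrable_normal_pdf.
by rewrite integral_normal_pdf mule1.
Qed.

Lemma heat_CK (s u a x y : R) : 0 < s -> 0 < u ->
  heat s a x * heat u x y =
  heat (s + u) a y * heat (s * u / (s + u)) (a + s / (s + u) * (y - a)) x.
Proof.
move=> s0 u0.
have su0 : 0 < s + u by rewrite addr_gt0.
have p0 : 0 < 2 * (pi : R) by apply: mulr_gt0 => //; apply: pi_gt0.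
rewrite /heat !mulf_div -!expRD.
have E1 : Num.sqrt (2 * pi * s) * Num.sqrt (2 * pi * u) =
  Num.sqrt (2 * pi * (s + u)) * Num.sqrt (2 * pi * (s * u / (s + u))).
  rewrite -sqrtrM; last by apply: ltW; apply: mulr_gt0.
  rewrite -sqrtrM; last by apply: ltW; apply: mulr_gt0.
  congr Num.sqrt; field; rewrite gt_eqF //.
rewrite E1; congr (expR _ / _).
field; rewrite !gt_eqF //.
Qed.

Lemma heat_lb (s m x d e : R) : 0 < s -> 0 <= d -> 0 <= e ->
  d <= x - m <= d + e ->
  expR (- (d + e) ^+ 2 / (2 * s)) / Num.sqrt (2 * pi * s) <= heat s m x.
Proof.
move=> s0 d0 e0 /andP[h1 h2].
rewrite /heat ler_pM2r ?invr_gt0 ?sqrtr_gt0 ?mulr_gt0 ?pi_gt0 //.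
rewrite ler_expR !mulNr lerN2 ler_pM2r ?invr_gt0 ?mulr_gt0 //.
rewrite -[leLHS]ger0_norm ?sqr_ge0 // -[leRHS]ger0_norm ?sqr_ge0 //.
rewrite !normrX ler_pXn2r ?nnegrE ?normr_ge0 //.
rewrite ger0_norm ?(le_trans d0) // ger0_norm ?addr_ge0 //.
Qed.

End Heat.

Local Arguments heat : simpl never.
Opaque heat.



Section Tele.
Context (R : realType).

Lemma prod_reindex (k m : nat) (F : nat -> R) :
  \prod_(n < k * m) F n = \prod_(j < k) \prod_(p < m) F (j * m + p)%N.
Proof.
elim: k => [|k IH]; first by rewrite mul0n !big_ord0.
rewrite mulSnr big_split_ord /= IH big_ord_recr /=.
by [].
Qed.

Lemma prod_mod (k m : nat) (G : nat -> R) :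
  \prod_(n < k * m) G (n %% m)%N = (\prod_(p < m) G p) ^+ k.
Proof.
rewrite (prod_reindex k m (fun n => G (n %% m)%N)) -[k in _ ^+ k]card_ord -prodr_const; apply: eq_bigr => j _.
apply: eq_bigr => p _; congr G.
by rewrite modnMDl modn_small.
Qed.

Definition Sg (tau : nat -> R) i := (tau i - tau 0%N) * (tau i.+1 - tau i) / (tau i.+1 - tau 0%N).
Definition Mu (tau xi : nat -> R) i :=
  xi 0%N + (tau i - tau 0%N) / (tau i.+1 - tau 0%N) * (xi i.+1 - xi 0%N).

Lemma inc_gt0 (tau : nat -> R) n : (forall i, (i <= n)%N -> tau i < tau i.+1) ->
  forall i, (i <= n)%N -> tau 0%N < tau i.+1.
Proof.
move=> h; elim=> [|i IH] iN; first exact: h.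
apply: lt_trans (IH (ltnW iN)) (h _ iN).
Qed.

Lemma tele (tau xi : nat -> R) n : (forall i, (i <= n)%N -> tau i < tau i.+1) ->
  \prod_(i < n.+1) heat (tau i.+1 - tau i) (xi i) (xi i.+1) =
  heat (tau n.+1 - tau 0%N) (xi 0%N) (xi n.+1) *
  \prod_(i < n) heat (Sg tau i.+1) (Mu tau xi i.+1) (xi i.+1).
Proof.
elim: n => [|n IH] h.
  by rewrite big_ord1 big_ord0 mulr1.
rewrite big_ord_recr /= IH; last by move=> i iN; apply: h; apply: (leq_trans iN).
have s0 : 0 < tau n.+1 - tau 0%N by rewrite subr_gt0; exact: (inc_gt0 h (leqnSn n)).
have u0 : 0 < tau n.+2 - tau n.+1 by rewrite subr_gt0; apply: h.
rewrite big_ord_recr /= mulrAC (@heat_CK R _ _ (xi 0%N) (xi n.+1) (xi n.+2) s0 u0).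
have su : tau n.+1 - tau 0%N + (tau n.+2 - tau n.+1) = tau n.+2 - tau 0%N by ring.
rewrite su.
set X := heat _ (xi 0%N + _) _.
have -> : X = heat (Sg tau n.+1) (Mu tau xi n.+1) (xi n.+1) by [].
set Y := heat (Sg tau n.+1) _ _.
set Z := heat _ (xi 0%N) (xi n.+2).
set Pi := \prod_(i < n) _.
by rewrite -mulrA [Pi * Y]mulrC.
Qed.

End Tele.


Section Setup.
Context (R : realType).

Definition tau (l r : R) (P : seq R) (i : nat) : R := nth 0 (l :: rcons P r) i.
Definition xiv (m : nat) (b : R) (v : nat -> R) (n p : nat) : R :=
  if (p.+1 < m)%N then v n.+1 else b.
Definition Mc (l r : R) (P : seq R) (a b : R) (v : nat -> R) (n p : nat) : R :=
  a + (tau l r P p.+1 - l) / (tau l r P p.+2 - l) * (xiv (size P) b v n p - a).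

Lemma tau0 l r P : tau l r P 0 = l. Proof. by []. Qed.
Lemma tauS l r P p : (p < size P)%N -> tau l r P p.+1 = nth 0 P p.
Proof. by move=> pP; rewrite /tau /= nth_rcons pP. Qed.
Lemma tau_end l r P : tau l r P (size P).+1 = r.
Proof. by rewrite /tau /= nth_rcons ltnn eqxx. Qed.

Lemma nth_ar (a b : R) (s : seq R) i :
  nth 0 (a :: rcons s b) i =
  if i == 0%N then a else if (i.-1 < size s)%N then nth 0 s i.-1 else
  if i.-1 == size s then b else 0.
Proof. by case: i => [|i] //=; rewrite nth_rcons. Qed.

Lemma bb_tele (l r a b : R) (P xs : seq R) :
  (forall i, (i <= size P)%N -> tau l r P i < tau l r P i.+1) ->
  size xs = size P ->
  bb_dens l r a b P xs =
  \prod_(p < size P) heat (Sg (tau l r P) p.+1)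
     (Mu (tau l r P) (fun i => nth 0 (a :: rcons xs b) i) p.+1)
     (nth 0 (a :: rcons xs b) p.+1).
Proof.
move=> inc sx.
rewrite /bb_dens.
rewrite (@tele R (tau l r P) (fun i => nth 0 (a :: rcons xs b) i) (size P) inc).
rewrite tau_end tau0 /= nth_rcons sx ltnn eqxx.
have H0 : heat (r - l) a b != 0.
  apply: lt0r_neq0; apply: heat_gt0; rewrite subr_gt0.
  have := inc_gt0 inc (leqnn (size P)); by rewrite tau0 tau_end.
by rewrite mulrC mulKf.
Qed.


Lemma xs_nth (m j : nat) (v : nat -> R) p : (p < m)%N ->
  nth 0 [seq curve m v j.+1 i | i <- iota 0 m] p = v (j * m + p)%N.
Proof.
by move=> pm; rewrite (nth_map 0%N) ?size_iota // nth_iota // add0n.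
Qed.

Lemma free_tele k l r am ap (P : seq R) v :
  (forall i, (i <= size P)%N -> tau l r P i < tau l r P i.+1) ->
  free_dens k l r am ap P v =
  \prod_(n < k * size P) heat (Sg (tau l r P) (n %% size P).+1)
     (Mc l r P (am (n %/ size P).+1) (ap (n %/ size P).+1) v n (n %% size P)) (v n).
Proof.
move=> inc; rewrite /free_dens.
rewrite (prod_reindex k (size P) (fun n => heat (Sg (tau l r P) (n %% size P).+1)
     (Mc l r P (am (n %/ size P).+1) (ap (n %/ size P).+1) v n (n %% size P)) (v n))).
apply: eq_bigr => j _.
rewrite bb_tele //; last by rewrite size_map size_iota.
apply: eq_bigr => p _.
have pm := ltn_ord p.
have m0 : (0 < size P)%N by apply: leq_ltn_trans pm.
have hd : ((j * size P + p) %/ size P)%N = j by rewrite divnMDl // divn_small // addn0.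
have hm : ((j * size P + p) %% size P)%N = p by rewrite modnMDl modn_small.
rewrite hd hm.
have e1 : nth 0 (am j.+1 :: rcons [seq curve (size P) v j.+1 i | i <- iota 0 (size P)] (ap j.+1)) p.+1
   = v (j * size P + p)%N.
  by rewrite /= nth_rcons size_map size_iota pm xs_nth.
have e2 : Mu (tau l r P) (fun i => nth 0 (am j.+1 :: rcons [seq curve (size P) v j.+1 i | i <- iota 0 (size P)] (ap j.+1)) i) p.+1
   = Mc l r P (am j.+1) (ap j.+1) v (j * size P + p) p.
  rewrite /Mu /Mc /= tau0 /xiv nth_rcons size_map size_iota.
  case: ifP => hp; first by rewrite xs_nth // addnS.
  have -> : p.+1 = size P by apply/eqP; rewrite eqn_leq pm leqNgt hp.
  by rewrite eqxx.
by rewrite e1 e2.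
Qed.

End Setup.


Section Num.
Context (R : realType).

Lemma chain_bounds (m : nat) (x ffv th u : nat -> R) (B : R) :
  (forall p, (p < m)%N -> 0 <= th p <= 1) ->
  (forall p, (p < m)%N -> 0 <= u p <= B) ->
  (forall p, (p < m)%N -> x p - ffv p =
      u p + th p * ((if (p.+1 < m)%N then x p.+1 else ffv m) - ffv p.+1)) ->
  forall p, (p < m)%N -> 0 <= x p - ffv p <= m%:R * B.
Proof.
move=> th01 u0B eq.
have aux : forall d p, (p + d.+1)%N = m -> 0 <= x p - ffv p <= d.+1%:R * B.
  elim=> [|d IH] p hp.
    have pm : (p < m)%N by lia.
    rewrite eq // (_ : (p.+1 < m)%N = false); last by lia.
    have -> : p.+1 = m by lia.
    by rewrite subrr mulr0 addr0 mul1r; apply: u0B.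
  have pm : (p < m)%N by lia.
  rewrite eq // (_ : (p.+1 < m)%N = true); last by lia.
  have /andP[E0 E1] := IH p.+1 (ltac:(lia)).
  have /andP[t0 t1] := th01 p pm.
  have /andP[u0 u1] := u0B p pm.
  apply/andP; split; first by rewrite addr_ge0 // mulr_ge0.
  have : th p * (x p.+1 - ffv p.+1) <= d.+1%:R * B.
    by apply: le_trans E1; apply: ler_piMl.
  move=> h; rewrite -[d.+2]addn1 natrD mulrDl mul1r addrC.
  by apply: lerD.
move=> p pm.
have /andP[h1 h2] := aux (m - p.+1)%N p ltac:(lia).
apply/andP; split => //; apply: le_trans h2 _.
have /andP[u0 u1] := u0B p pm.
apply: ler_wpM2r; first by apply: le_trans u1.
by rewrite ler_nat; lia.
Qed.


Lemma sqrt2pi_le3 : Num.sqrt (2 * pi) <= 3 :> R.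
Proof.
have h : pi / 2 < 2 :> R by apply: pihalf_lt2.
have p4 : (pi : R) < 4 by move: h; rewrite ltr_pdivrMr // => h; lra.
rewrite -(@ger0_norm _ 3) // -sqrtr_sqr; apply: ler_wsqrtr.
by have := @pi_gt0 R; lra.
Qed.

Lemma lam_w (s d del L rho : R) : 0 < s -> 0 < del -> 0 <= rho <= 1 -> 0 <= L ->
  d = 2 * L * s * rho ->
  del / 3 * expR (- (4 * L ^+ 2 * s + del ^+ 2)) <=
  expR (- (d + del * Num.sqrt s) ^+ 2 / (2 * s)) / Num.sqrt (2 * pi * s) * (del * Num.sqrt s).
Proof.
move=> s0 d0 /andP[r0 r1] L0 ->.
have q0 : 0 < Num.sqrt s by rewrite sqrtr_gt0.
have p0 : 0 < 2 * (pi : R) by apply: mulr_gt0 => //; apply: pi_gt0.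
have sp0 : 0 < Num.sqrt (2 * pi) :> R by rewrite sqrtr_gt0.
rewrite sqrtrM; last exact: ltW.
have -> : expR (- (2 * L * s * rho + del * Num.sqrt s) ^+ 2 / (2 * s)) /
   (Num.sqrt (2 * pi) * Num.sqrt s) * (del * Num.sqrt s) =
   del / Num.sqrt (2 * pi) * expR (- (2 * L * s * rho + del * Num.sqrt s) ^+ 2 / (2 * s)).
  field; by rewrite !gt_eqF.
apply: ler_pM.
- by apply: divr_ge0; [apply: ltW | ].
- by apply: ltW; apply: expR_gt0.
- rewrite ler_pM2l // lef_pV2 ?posrE //; exact: sqrt2pi_le3.
- rewrite ler_expR !mulNr lerN2 ler_pdivrMr; last by apply: mulr_gt0.
  have ss : s = Num.sqrt s ^+ 2 by rewrite sqr_sqrtr // ltW.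
  set q := Num.sqrt s in q0 ss *.
  rewrite ss.
  have hr : rho ^+ 2 <= 1 by rewrite expr_le1.
  have h1 : (2 * L * q ^+ 2 * rho + del * q) ^+ 2 <=
      2 * (2 * L * q ^+ 2 * rho) ^+ 2 + 2 * (del * q) ^+ 2.
    have := sqr_ge0 (2 * L * q ^+ 2 * rho - del * q); nra.
  apply: le_trans h1 _.
  have h2 : (2 * L * q ^+ 2 * rho) ^+ 2 <= (2 * L * q ^+ 2) ^+ 2.
    rewrite exprMn [X in _ <= X]expr2 -[X in _ <= X]mulr1 -expr2.
    by apply: ler_wpM2l => //; apply: sqr_ge0.
  have e : (4 * L ^+ 2 * q ^+ 2 + del ^+ 2) * (2 * q ^+ 2) =
     2 * (2 * L * q ^+ 2) ^+ 2 + 2 * (del * q) ^+ 2 by ring.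
  by rewrite e; lra.
Qed.

Lemma expR_inv_le (q : R) : 0 < q -> expR (- q^-1) <= q.
Proof.
move=> q0; rewrite expRN -[X in _ <= X]invrK lef_pV2 ?posrE ?expR_gt0 ?invr_gt0 //.
by apply: le_trans (expR_ge1Dx _); rewrite lerDr.
Qed.

Lemma pow_lb (q M : R) (m : nat) : 0 < q -> m%:R <= M ->
  expR (- (M / q)) <= q ^+ m.
Proof.
move=> q0 mM.
apply: (@le_trans _ _ (expR (- q^-1) ^+ m)); last first.
  by apply: lerXn2r; rewrite ?nnegrE ?expR_ge0 ?(ltW q0) //; apply: expR_inv_le.
rewrite -expRM_natr ler_expR mulNr lerN2 mulrC ler_pM2r ?invr_gt0 //.
Qed.

End Num.


Section Main.
Context (R : realType).

Lemma tau_facts (T l r : R) (P : seq R) :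
  l < r -> sorted <%R P ->
  (forall p, p \in P -> (l < p < l + Num.sqrt T) /\ p < r) ->
  (forall i, (i <= size P)%N -> tau l r P i < tau l r P i.+1) /\
  (forall p, (p < size P)%N -> l < tau l r P p.+1 /\ tau l r P p.+1 < l + Num.sqrt T
       /\ tau l r P p.+1 < r).
Proof.
move=> lr Ps Pin.
have tin : forall p, (p < size P)%N -> l < tau l r P p.+1 /\ tau l r P p.+1 < l + Num.sqrt T
       /\ tau l r P p.+1 < r.
  move=> p pm; rewrite tauS //.
  have [/andP[h1 h2] h3] := Pin _ (mem_nth 0 pm); by [].
split => // i.
case: i => [|i] im.
  rewrite tau0; case: (ltnP 0 (size P)) => [m0|]; first by have [] := tin 0%N m0.
  by rewrite leqn0 => /eqP m0; rewrite -m0 tau_end.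
have ilt : (i < size P)%N by [].
rewrite tauS //.
case: (ltnP i.+1 (size P)) => h.
  rewrite tauS //.
  apply: (sorted_ltn_nth lt_trans 0 Ps) => //; by rewrite inE.
have -> : i.+2 = (size P).+1 by lia.
rewrite tau_end; have [_ [_ +]] := tin i ilt; by rewrite tauS.
Qed.


Definition ff (l r L a b t : R) :=
  a + (b - a) * (t - l) / (r - l) + 2 * L * (t - l) * (r - t) / (r - l).

Lemma ff_step l r L a b t1 t2 : l < t2 -> l < r ->
  ff l r L a b t1 = a + (t1 - l) / (t2 - l) * (ff l r L a b t2 - a)
     + 2 * L * (t1 - l) * (t2 - t1) / (r - l).
Proof.
move=> h1 h2; rewrite /ff; field.
by rewrite !gt_eqF // subr_gt0.
Qed.

Lemma ff_end l r L a b : l < r -> ff l r L a b r = b.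
Proof. move=> h; rewrite /ff; field; by rewrite gt_eqF // subr_gt0. Qed.

Lemma ff_diff l r L a b a' b' t : l < r ->
  ff l r L a b t - ff l r L a' b' t =
  (a - a') * (1 - (t - l) / (r - l)) + (b - b') * ((t - l) / (r - l)).
Proof. move=> h; rewrite /ff; field; by rewrite gt_eqF // subr_gt0. Qed.

Lemma rho01 (l r t : R) : l < r -> l <= t <= r -> 0 <= (t - l) / (r - l) <= 1.
Proof.
move=> lr /andP[h1 h2]; have rl : 0 < r - l by rewrite subr_gt0.
apply/andP; split; first by apply: divr_ge0; rewrite subr_ge0 // ltW.
by rewrite ler_pdivrMr // mul1r lerD2r.
Qed.

Lemma convex_ge (X Y c rho : R) : 0 <= rho <= 1 -> c <= X -> c <= Y ->
  c <= X * (1 - rho) + Y * rho.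
Proof. move=> /andP[h1 h2] hX hY; nra. Qed.

Lemma h_ge_g (g : R -> R) (K l r t : R) : l < r -> l <= t <= r -> 0 <= K ->
  g l = 0 -> g r = 0 ->
  (forall x y, l <= x <= r -> l <= y <= r -> `|g x - g y| <= K * `|x - y|) ->
  g t <= 2 * K * (t - l) * (r - t) / (r - l).
Proof.
move=> lr /andP[lt tr] K0 gl gr glip.
have rl : 0 < r - l by rewrite subr_gt0.
have g1 : g t <= K * (t - l).
  have := glip t l ltac:(by rewrite lt tr) ltac:(by rewrite lexx ltW).
  rewrite gl subr0 (ger0_norm (x := t - l)) ?subr_ge0 //.
  by apply: le_trans; apply: ler_norm.
have g2 : g t <= K * (r - t).
  have := glip t r ltac:(by rewrite lt tr) ltac:(by rewrite ltW // lexx).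
  rewrite gr subr0 distrC (ger0_norm (x := r - t)) ?subr_ge0 //.
  by apply: le_trans; apply: ler_norm.
rewrite ler_pdivlMr //.
case: (lerP (t - l) (r - t)) => h.
  apply: le_trans (ler_wpM2r (ltW rl) g1) _.
  have : 0 <= K * (t - l) by rewrite mulr_ge0 // subr_ge0.
  nra.
apply: le_trans (ler_wpM2r (ltW rl) g2) _.
have : 0 <= K * (r - t) by rewrite mulr_ge0 // subr_ge0.
nra.
Qed.


Lemma sg_facts (T l r : R) (P : seq R) :
  (forall i, (i <= size P)%N -> tau l r P i < tau l r P i.+1) ->
  forall p, (p < size P)%N ->
  [/\ 0 < Sg (tau l r P) p.+1, Sg (tau l r P) p.+1 <= tau l r P p.+1 - l &
      ((p.+1 < size P)%N -> Sg (tau l r P) p.+1 <= tau l r P p.+2 - tau l r P p.+1)].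
Proof.
move=> tinc p pm.
have a0 : 0 < tau l r P p.+1 - l.
  by rewrite subr_gt0 -(tau0 l r P); apply: (inc_gt0 tinc); apply: ltnW.
have b0 : 0 < tau l r P p.+2 - tau l r P p.+1 by rewrite subr_gt0; apply: tinc.
rewrite /Sg tau0.
set a := tau l r P p.+1 - l in a0 *.
set b := tau l r P p.+2 - tau l r P p.+1 in b0 *.
have -> : tau l r P p.+2 - l = a + b by rewrite /a /b; ring.
have ab : 0 < a + b by rewrite addr_gt0.
split.
- by rewrite divr_gt0 // mulr_gt0.
- by rewrite ler_pdivrMr //; nra.
- by move=> _; rewrite ler_pdivrMr //; nra.
Qed.

Lemma sum_sg (T l r : R) (P : seq R) :
  (forall i, (i <= size P)%N -> tau l r P i < tau l r P i.+1) ->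
  (forall p, (p < size P)%N -> l < tau l r P p.+1 /\ tau l r P p.+1 < l + Num.sqrt T
       /\ tau l r P p.+1 < r) ->
  \sum_(p < size P) Sg (tau l r P) p.+1 <= 2 * Num.sqrt T.
Proof.
move=> tinc tin.
case E: (size P) => [|m]; first by rewrite big_ord0 mulr_ge0 // sqrtr_ge0.
have mP : (m < size P)%N by rewrite E.
rewrite big_ord_recr /= mulr2n mulrDl mul1r.
apply: lerD.
  apply: (@le_trans _ _ (\sum_(p < m) (tau l r P p.+2 - tau l r P p.+1))).
    apply: ler_sum => p _.
    have pP : (p < size P)%N by rewrite E ltnW // ltnS.
    have [_ _ h] := sg_facts T tinc pP; apply: h; by rewrite E ltnS.
  rewrite -(big_mkord xpredT (fun p => tau l r P p.+2 - tau l r P p.+1)).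
  rewrite (@telescope_sumr _ 0 m (fun k => tau l r P k.+1)) //.
  have [h1 [h2 _]] := tin m mP.
  case: (posnP m) => [m0|m0].
    by rewrite m0 subrr sqrtr_ge0.
  have [h3 [h4 _]] := tin 0%N (ltn_trans m0 mP).
  lra.
have [h1 _ _] := sg_facts T tinc mP.
have [_ h2 _] := sg_facts T tinc mP.
have [h3 [h4 _]] := tin m mP.
lra.
Qed.


Lemma idx_lt (jj q k m : nat) : (jj < k)%N -> (q < m)%N -> (jj * m + q < k * m)%N.
Proof. move=> h1 h2; nia. Qed.
Lemma idx_div (jj q m : nat) : (q < m)%N -> ((jj * m + q) %/ m)%N = jj.
Proof. move=> h; rewrite divnMDl ?divn_small ?addn0 //; lia. Qed.
Lemma idx_mod (jj q m : nat) : (q < m)%N -> ((jj * m + q) %% m)%N = q.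
Proof. by move=> h; rewrite modnMDl modn_small. Qed.
Lemma succ_eq (p m : nat) : (p < m)%N -> (m <= p.+1)%N -> p.+2 = m.+1.
Proof. move=> h1 h2; lia. Qed.


Lemma nat_h1 (jj d k : nat) : (jj + d.+2 = k)%N -> (jj.+1 < k)%N /\ (jj.+1 + d.+1 = k)%N.
Proof. move=> h; split; lia. Qed.
Lemma nat_h2 (jj k : nat) : (jj + 1 = k)%N -> jj.+1 = k.
Proof. move=> h; lia. Qed.
Lemma nat_h3 (jj k : nat) : (jj < k)%N -> (jj + (k - jj.+1).+1 = k)%N.
Proof. move=> h; lia. Qed.

Lemma ff_conv (l r L a b t : R) : l < r ->
  ff l r L a b t = a * (1 - (t - l) / (r - l)) + b * ((t - l) / (r - l))
     + 2 * L * (t - l) * (r - t) / (r - l).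
Proof. move=> h; rewrite /ff; field; by rewrite gt_eqF // subr_gt0. Qed.

End Main.

Unset Implicit Arguments.


Theorem mainTheorem5 (R : realType) (k : nat) (b0 b1 lam0 lam1 mu : R) :
  0 < b0 -> 0 < b1 -> 0 < lam0 -> 0 < lam1 -> 0 < mu < 1 ->
  exists C : R, 0 < C /\
  forall (b2 T l r : R) (am ap : nat -> R) (g : R -> R) (P : seq R),
    0 < b2 -> 10 <= T -> l < r ->
    sorted <%R P ->
    (forall p, p \in P -> (l < p < l + Num.sqrt T) /\ p < r) ->
    g l = 0 -> g r = 0 ->
    (forall x y, l <= x <= r -> l <= y <= r ->
       `|g x - g y| <= b1 * T * `|x - y|) ->
    r - l <= b0 * T ->
    (size P)%:R <= b0 * T ->
    (forall j, (1 <= j < k)%N ->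
       lam0 * Num.sqrt T <= am j - am j.+1 /\
       lam0 * Num.sqrt T <= ap j - ap j.+1) ->
    lam1 * T <= am k - g l ->
    lam1 * T <= ap k - g r ->
    am 1%N - g l <= b2 * T ^+ 2 ->
    ap 1%N - g r <= b2 * T ^+ 2 ->
    C^-1 * expR (- C * (T ^+ 2 * Num.sqrt T))
      <= PL_H k mu lam0 lam1 T l r am ap g P.
Proof.
move=> b00 b10 l00 l10 /andP[mu0 mu1].
pose A := 8 * b1 ^+ 2 + lam0 ^+ 2 / b0 + 3 * b0 ^+ 2 / ((1 - mu) * lam0).
have mu1' : 0 < 1 - mu by rewrite subr_gt0.
have A0 : 0 <= A.
  rewrite /A; apply: addr_ge0; first apply: addr_ge0.
  - by apply: mulr_ge0 => //; apply: sqr_ge0.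
  - by apply: divr_ge0; [apply: sqr_ge0 | apply: ltW].
  - by apply: divr_ge0; [apply: mulr_ge0 => //; apply: sqr_ge0 | apply: ltW; apply: mulr_gt0].
have kA0 : 0 <= k%:R * A by apply: mulr_ge0.
exists (1 + k%:R * A); split; first by apply: (lt_le_trans ltr01); rewrite lerDl.
move=> b2 T l r am ap g P b20 T10 lr Ps Pin gl gr glip rl mb gaps ak bk _ _.
have [tinc tin] := tau_facts lr Ps Pin.

set m := size P in mb tinc tin *.
have T0 : 0 < T by lra.
have T1 : 1 <= T by lra.
pose sT := Num.sqrt T.
have sT1 : 1 <= sT by rewrite /sT -sqrtr1 ler_wsqrtr.
have sTT : sT <= T.
  have := sqr_sqrtr (ltW T0); rewrite -/sT => h; nra.
have sT0 : 0 < sT by lra.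
pose L := b1 * T.
have L0 : 0 <= L by rewrite /L mulr_ge0 // ltW.
pose del := (1 - mu) * lam0 / (b0 * T).
have del0 : 0 < del by rewrite /del divr_gt0 // ?mulr_gt0.
pose sg p := Sg (tau l r P) p.+1.
pose dd p := 2 * L * (tau l r P p.+1 - l) * (tau l r P p.+2 - tau l r P p.+1) / (r - l).
pose Mn n v := Mc l r P (am (n %/ m)%N.+1) (ap (n %/ m)%N.+1) v n (n %% m)%N.
pose al n v := Mn n v + dd (n %% m)%N.
pose w n := del * Num.sqrt (sg (n %% m)%N).
pose lam p := expR (- (dd p + del * Num.sqrt (sg p)) ^+ 2 / (2 * sg p)) / Num.sqrt (2 * pi * sg p).
pose psi n v := heat (sg (n %% m)%N) (Mn n v) (v n).
have sgp : forall p, (p < m)%N -> 0 < sg p.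
  by move=> p pm; have [] := sg_facts T tinc pm.
have sgT : forall p, (p < m)%N -> sg p <= T.
  move=> p pm; have [_ h _] := sg_facts T tinc pm; have [_ [h2 _]] := tin p pm.
  have := sTT; rewrite /sT /sg => ?; lra.
have modm : forall n, (n < k * m)%N -> (n %% m < m)%N.
  move=> n nN; rewrite ltn_pmod //; by case: (posnP m) nN => [->|//]; rewrite muln0.
have fd : forall v, free_dens k l r am ap P v = \prod_(n < k * m) psi n v.
  by move=> v; rewrite (free_tele k am ap v tinc).
have psi0 : forall n v, (n < k * m)%N -> 0 <= psi n v.
  by move=> n v nN; apply: heat_ge0; apply: sgp; apply: modm.
have fd0 : forall v, 0 <= free_dens k l r am ap P v.
  by move=> v; rewrite fd; apply: prodr_ge0 => n _; apply: psi0.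
have Mn_dep : forall n v v', v n.+1 = v' n.+1 -> Mn n v = Mn n v'.
  by move=> n v v' h; rewrite /Mn /Mc /xiv h.
have den_le1 : (iint (k * m) (fun v => (free_dens k l r am ap P v * (Wev k g P v)%:R)%:E) <= 1%:E)%E.
  apply: (@iint_ub _ _ _ psi 1) => //.
  - move=> n v v' nN vv'; rewrite /psi (Mn_dep n v v'); last by apply: vv'.
    by rewrite (vv' n (leqnn n)).
  - move=> n v K nN K0.
    have -> : (fun x => (K * psi n (upd n x v))%:E) = (fun x => (K * heat (sg (n %% m)%N) (Mn n v) x)%:E).
      apply: funext => x; rewrite /psi (Mn_dep n (upd n x v) v); last first.
        by rewrite /upd (gtn_eqF (ltnSn n)).
      by rewrite /upd eqxx.
    by rewrite int_heat //; apply: sgp; apply: modm.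
  - move=> v _; rewrite mul1r -fd lee_fin.
    by case: (Wev _ _ _ _); rewrite ?mulr1 ?mulr0 ?lexx ?fd0.
  - by move=> v; rewrite lee_fin mulr_ge0.

have tau_le_r : forall p, (p < m)%N -> tau l r P p.+2 <= r.
  move=> p pm; case: (ltnP p.+1 m) => h.
    by have [_ [_ /ltW]] := tin p.+1 h.
  rewrite (succ_eq pm h).
  by rewrite tau_end.
have tau_ge_l : forall p, (p < m)%N -> l < tau l r P p.+2.
  move=> p pm; rewrite -(tau0 l r P); apply: (inc_gt0 tinc); exact: pm.
have tau_in : forall p, (p < m)%N -> l <= tau l r P p.+1 <= r.
  by move=> p pm; have [h1 [_ h3]] := tin p pm; rewrite !ltW.
have dd_eq : forall p, (p < m)%N ->
    dd p = 2 * L * sg p * ((tau l r P p.+2 - l) / (r - l)).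
  move=> p pm; rewrite /dd /sg /Sg tau0; field.
  by rewrite !gt_eqF // subr_gt0 // tau_ge_l.
have rho01' : forall p, (p < m)%N -> 0 <= (tau l r P p.+2 - l) / (r - l) <= 1.
  move=> p pm; apply: rho01 => //; by rewrite ltW ?tau_le_r ?tau_ge_l.
have dd0 : forall p, (p < m)%N -> 0 <= dd p.
  move=> p pm; rewrite dd_eq //; have /andP[h _] := rho01' p pm.
  apply: mulr_ge0 => //; apply: mulr_ge0; [apply: mulr_ge0 => // | apply: ltW; exact: sgp].
have mB : m%:R * (del * sT) <= (1 - mu) * lam0 * sT.
  have -> : (1 - mu) * lam0 * sT = b0 * T * (del * sT).
    by rewrite /del; field; rewrite ?mulf_neq0 ?gt_eqF //.
  by apply: ler_wpM2r => //; rewrite mulr_ge0 // ltW.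
have num_lb : (((\prod_(n < k * m) lam (n %% m)%N) * \prod_(n < k * m) w n)%:E <=
     iint (k * m) (fun v => (free_dens k l r am ap P v *
        (Wev k g P v && Hev k mu lam0 lam1 T g P v)%:R)%:E))%E.
  apply: (@iint_lb _ _ _ al w) => //.
  - by move=> n nN; rewrite /w mulr_ge0 // ?sqrtr_ge0 // ltW.
  - by apply: prodr_ge0 => n _; rewrite /lam divr_ge0 // ?expR_ge0 ?sqrtr_ge0.
  - move=> n v v' nN vv'; rewrite /al (Mn_dep n v v') //; by apply: vv'.
  - move=> v _ vreg.
    have Hreg : forall jj p, (jj < k)%N -> (p < m)%N ->
        0 <= v (jj * m + p)%N - ff l r L (am jj.+1) (ap jj.+1) (tau l r P p.+1)
          <= m%:R * (del * sT).
      move=> jj p jk pm.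
      apply: (@chain_bounds _ m (fun p => v (jj * m + p)%N)
         (fun p => ff l r L (am jj.+1) (ap jj.+1) (tau l r P p.+1))
         (fun p => (tau l r P p.+1 - l) / (tau l r P p.+2 - l))
         (fun p => v (jj * m + p)%N - al (jj * m + p)%N v)) => // q qm.
      + apply: rho01; first exact: tau_ge_l.
        have [h1 _] := tin q qm; by rewrite ltW // ltW // tinc.
      + have nN : (jj * m + q < k * m)%N by apply: idx_lt.
        have hd : ((jj * m + q) %/ m)%N = jj by apply: idx_div.
        have hm : ((jj * m + q) %% m)%N = q by apply: idx_mod.
        have /andP[h1 h2] := vreg _ nN.
        apply/andP; split; first by rewrite subr_ge0.
        rewrite lerBlDl; apply: le_trans h2 _; rewrite lerD2l /w hm.
        by apply: ler_wpM2l; [apply: ltW | apply: ler_wsqrtr; apply: sgT].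
      + have hd : ((jj * m + q) %/ m)%N = jj by apply: idx_div.
        have hm : ((jj * m + q) %% m)%N = q by apply: idx_mod.
        rewrite /al /Mn /Mc /xiv hd hm.
        rewrite (@ff_step R l r L (am jj.+1) (ap jj.+1) (tau l r P q.+1) (tau l r P q.+2)) //;
          last exact: tau_ge_l.
        have -> : (if (q.+1 < m)%N then v (jj * m + q).+1 else ap jj.+1) =
                  (if (q.+1 < m)%N then v (jj * m + q.+1)%N
                   else ff l r L (am jj.+1) (ap jj.+1) (tau l r P m.+1)).
          by rewrite addnS tau_end ff_end.
        rewrite /dd; set X := (if _ then _ else _); set th := (_ / (tau l r P q.+2 - l)); set f2 := ff _ _ _ _ _ (tau l r P q.+2); ring.
    have curveE : forall jj i, curve m v jj.+1 i = v (jj * m + i)%N by [].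
    have gap : forall jj p, (jj.+1 < k)%N -> (p < m)%N ->
        mu * lam0 * sT <= v (jj * m + p)%N - v (jj.+1 * m + p)%N.
      move=> jj p h pm.
      have /andP[h1 _] := Hreg jj p (ltnW h) pm.
      have /andP[_ h2] := Hreg jj.+1 p h pm.
      have dif := ff_diff L (am jj.+1) (ap jj.+1) (am jj.+2) (ap jj.+2) (tau l r P p.+1) lr.
      have [g1 g2] := gaps jj.+1 (ltac:(by rewrite ltn0Sn h)).
      have cv := convex_ge (rho01 lr (tau_in p pm)) g1 g2.
      move: h1 h2 dif cv mB; rewrite /sT; lra.
    have bot : forall jj p, jj.+1 = k -> (p < m)%N ->
        mu * lam1 * T <= v (jj * m + p)%N - g (nth 0 P p).
      move=> jj p h pm.
      have /andP[h1 _] := Hreg jj p (ltac:(by rewrite h)) pm.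
      rewrite -(tauS l r pm).
      have hg := h_ge_g (K := b1 * T) lr (tau_in p pm) (ltac:(by rewrite mulr_ge0 // ltW)) gl gr glip.
      have fc := ff_conv L (am jj.+1) (ap jj.+1) (tau l r P p.+1) lr.
      rewrite h in fc h1.
      have ak' : lam1 * T <= am k by move: ak; rewrite gl subr0.
      have bk' : lam1 * T <= ap k by move: bk; rewrite gr subr0.
      have cv := convex_ge (rho01 lr (tau_in p pm)) ak' bk'.
      have ml : mu * lam1 * T <= lam1 * T.
        by rewrite -mulrA; apply: ler_piMl; [apply: mulr_ge0; apply: ltW | apply: ltW].
      move: h1 hg fc cv ml; rewrite /L; lra.
    have Wa : forall d jj, (jj + d.+1 = k)%N -> forall p, (p < m)%N ->
        g (nth 0 P p) < v (jj * m + p)%N.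
      elim=> [|d IH] jj hj p pm.
        have := bot jj p (nat_h2 hj) pm.
        have : 0 < mu * lam1 * T by rewrite mulr_gt0 // mulr_gt0.
        lra.
      have [h1 h2] := nat_h1 hj.
      have := IH jj.+1 h2 p pm; have := gap jj p h1 pm.
      have : 0 < mu * lam0 * sT by rewrite mulr_gt0 // mulr_gt0.
      lra.
    have WevT : Wev k g P v.
      apply/forallP => jj; apply/forallP => i; rewrite curveE.
      exact: (Wa (k - jj.+1)%N jj (nat_h3 (ltn_ord jj)) i (ltn_ord i)).
    have HevT : Hev k mu lam0 lam1 T g P v.
      apply/forallP => jj; apply/forallP => i; apply/andP; split; apply/implyP => h.
        exact: (gap jj i h (ltn_ord i)).
      exact: (bot jj i (eqP h) (ltn_ord i)).
    rewrite WevT HevT /= mulr1 lee_fin fd.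
    apply: ler_prod => n _; apply/andP; split.
      by rewrite /lam divr_ge0 // ?expR_ge0 ?sqrtr_ge0.
    have nN := ltn_ord n.
    have /andP[h1 h2] := vreg n nN.
    rewrite /psi /lam; apply: heat_lb.
    - by apply: sgp; apply: modm.
    - by apply: dd0; apply: modm.
    - by rewrite mulr_ge0 // ?sqrtr_ge0 // ltW.
    - move: h1 h2; rewrite /al /w; set M := Mn n v; set D := dd _; set E := del * _.
      move=> h1 h2; apply/andP; split; lra.
  - by move=> v; rewrite lee_fin mulr_ge0.

have X1 : 1 <= T ^+ 2 * sT.
  have h : 1 <= T ^+ 2 by rewrite expr2; nra.
  nra.
have X2 : T ^+ 2 <= T ^+ 2 * sT by rewrite ler_peMr // sqr_ge0.
have X0 : 0 <= T ^+ 2 * sT by lra.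
have num_le_den : (iint (k * m) (fun v => (free_dens k l r am ap P v *
        (Wev k g P v && Hev k mu lam0 lam1 T g P v)%:R)%:E) <=
      iint (k * m) (fun v => (free_dens k l r am ap P v * (Wev k g P v)%:R)%:E))%E.
  apply: iint_le => v; first by rewrite lee_fin mulr_ge0.
  rewrite lee_fin; case: (Wev _ _ _ _); case: (Hev _ _ _ _ _ _ _ _); by rewrite /= ?mulr1 ?mulr0 ?fd0.
have prodE : (\prod_(n < k * m) lam (n %% m)%N) * \prod_(n < k * m) w n =
    (\prod_(p < m) (lam p * (del * Num.sqrt (sg p)))) ^+ k.
  rewrite -big_split /=.
  by rewrite -(prod_mod k m (fun p => lam p * (del * Num.sqrt (sg p)))).
have step1 : \prod_(p < m) (del / 3 * expR (- (4 * L ^+ 2 * sg p + del ^+ 2))) <=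
             \prod_(p < m) (lam p * (del * Num.sqrt (sg p))).
  apply: ler_prod => p _; apply/andP; split.
    by rewrite mulr_ge0 ?expR_ge0 // divr_ge0 // ltW.
  exact: (lam_w (sgp p (ltn_ord p)) del0 (rho01' p (ltn_ord p)) L0 (dd_eq p (ltn_ord p))).
have step2 : \prod_(p < m) (del / 3 * expR (- (4 * L ^+ 2 * sg p + del ^+ 2))) =
    (del / 3) ^+ m * expR (- \sum_(p < m) (4 * L ^+ 2 * sg p + del ^+ 2)).
  rewrite big_split /= prodr_const card_ord; congr (_ * _).
  by rewrite -sumrN expR_sum.
have step3 : \sum_(p < m) (4 * L ^+ 2 * sg p + del ^+ 2) <= 8 * b1 ^+ 2 * T ^+ 2 * sT + lam0 ^+ 2 / b0.
  rewrite big_split /= -mulr_sumr sumr_const card_ord.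
  have hs := sum_sg tinc tin.
  have e1 : 4 * L ^+ 2 * \sum_(i < m) sg i <= 8 * b1 ^+ 2 * T ^+ 2 * sT.
    have -> : 8 * b1 ^+ 2 * T ^+ 2 * sT = 4 * L ^+ 2 * (2 * sT) by rewrite /L; ring.
    by apply: ler_wpM2l; [rewrite mulr_ge0 // sqr_ge0 | exact: hs].
  have e2 : del ^+ 2 *+ m <= lam0 ^+ 2 / b0.
    rewrite -mulr_natr.
    apply: (@le_trans _ _ (del ^+ 2 * (b0 * T))).
      by apply: ler_wpM2l => //; apply: sqr_ge0.
    have -> : del ^+ 2 * (b0 * T) = (1 - mu) ^+ 2 * lam0 ^+ 2 / b0 / T.
      by rewrite /del; field; rewrite ?mulf_neq0 ?gt_eqF.
    rewrite ler_pdivrMr // ler_pdivrMr //.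
    have h1 : (1 - mu) ^+ 2 <= 1 by rewrite expr2; nra.
    have h2 : lam0 ^+ 2 / b0 * T * b0 = lam0 ^+ 2 * T by field; rewrite gt_eqF.
    rewrite h2; have hl := sqr_ge0 lam0; nra.
  by apply: lerD.
have step4 : expR (- (3 * b0 ^+ 2 * T ^+ 2 / ((1 - mu) * lam0))) <= (del / 3) ^+ m.
  have -> : 3 * b0 ^+ 2 * T ^+ 2 / ((1 - mu) * lam0) = b0 * T / (del / 3).
    by rewrite /del; field; rewrite ?mulf_neq0 ?gt_eqF.
  by apply: pow_lb => //; rewrite divr_gt0.
have curve_lb : expR (- (A * (T ^+ 2 * sT))) <= \prod_(p < m) (lam p * (del * Num.sqrt (sg p))).
  apply: le_trans step1; rewrite step2.
  apply: (@le_trans _ _ (expR (- (3 * b0 ^+ 2 * T ^+ 2 / ((1 - mu) * lam0))) *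
                          expR (- (8 * b1 ^+ 2 * T ^+ 2 * sT + lam0 ^+ 2 / b0)))).
    rewrite -expRD ler_expR.
    have ha : 3 * b0 ^+ 2 * T ^+ 2 / ((1 - mu) * lam0) <= 3 * b0 ^+ 2 / ((1 - mu) * lam0) * (T ^+ 2 * sT).
      rewrite mulrAC; apply: ler_wpM2l; last exact: X2.
      by apply: divr_ge0; [apply: mulr_ge0 => //; apply: sqr_ge0 | apply: ltW; apply: mulr_gt0].
    have hb : lam0 ^+ 2 / b0 <= lam0 ^+ 2 / b0 * (T ^+ 2 * sT).
      by rewrite ler_peMr // divr_ge0 // ?sqr_ge0 // ltW.
    move: ha hb; rewrite /A; lra.
  apply: ler_pM.
  - by apply: ltW; apply: expR_gt0.
  - by apply: ltW; apply: expR_gt0.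
  - exact: step4.
  - by rewrite ler_expR lerN2.
rewrite prodE in num_lb.
set Y := (\prod_(p < m) (lam p * (del * Num.sqrt (sg p)))) ^+ k in num_lb *.
have Y_lb : expR (- (k%:R * A * (T ^+ 2 * sT))) <= Y.
  have -> : - (k%:R * A * (T ^+ 2 * sT)) = - (A * (T ^+ 2 * sT)) * k%:R by ring.
  rewrite expRM_natr; apply: lerXn2r => //; rewrite nnegrE ?expR_ge0 //.
  by apply: le_trans curve_lb; apply: expR_ge0.
have Y0 : 0 < Y by apply: lt_le_trans Y_lb; apply: expR_gt0.
have fin_lb : (1 + k%:R * A)^-1 * expR (- (1 + k%:R * A) * (T ^+ 2 * Num.sqrt T)) <= Y.
  apply: le_trans Y_lb; rewrite -[X in _ <= X]mul1r.
  apply: ler_pM.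
  - by rewrite invr_ge0; lra.
  - by apply: ltW; apply: expR_gt0.
  - by rewrite invf_le1; lra.
  - rewrite ler_expR !mulNr lerN2 -/sT; apply: ler_wpM2r => //; lra.
rewrite /PL_H /Efree -/m.
set N1 := iint (k * m) (fun v => (free_dens k l r am ap P v *
        (Wev k g P v && Hev k mu lam0 lam1 T g P v)%:R)%:E) in num_lb num_le_den *.
set N2 := iint (k * m) (fun v => (free_dens k l r am ap P v * (Wev k g P v)%:R)%:E)
  in num_le_den den_le1 *.
clearbody N1 N2.
move: N1 N2 num_lb num_le_den den_le1.
case=> [x||]; case=> [y||] //= hx hxy hy.
- rewrite lee_fin in hx; rewrite lee_fin in hxy; rewrite lee_fin in hy.
  have y0 : 0 < y by lra.
  apply: le_trans fin_lb _.
  rewrite ler_pdivlMr //.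
  apply: le_trans hx; rewrite -[X in _ <= X]mulr1; apply: ler_wpM2l => //; lra.
Qed.
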